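(* Let $A\in\mathbb{R}^{m\times n}$ have rank $r\ge 1$, and let $S$ be an ordered subset of $r$ elements of $\{1,\dots,m\}$ such that the rows of $A$ indexed by $S$ are linearly independent. Let $\epsilon\ge 0$ and let $T$ be an ordered subset of $r$ elements of $\{1,\dots,n\}$ such that $A[S,T]$ is a $(1+\epsilon)$-local maximizer for the absolute determinant on the set of $r\times r$ nonsingular submatrices of $A[S,:]$. Let $\hat A:=A[:,T]$ and let $H\in\mathbb{R}^{n\times m}$ be the matrix whose rows indexed by $T$ are given by $\hat A^+=(\hat A^\top\hat A)^{-1}\hat A^\top$ and whose other rows are zero. Then $H$ is an ah-symmetric reflexive generalized inverse of $A$ satisfying $\|H\|_1\le r(1+\epsilon)\|H^r_{opt}\|_1$, where $H^r_{opt}$ is an ah-symmetric reflexive generalized inverse of $A$ of minimum 1-norm.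
   Context: $A[S,T]$ is the submatrix with row indices $S$ and column indices $T$; $A[S,:]$ (resp. $A[:,T]$) is the submatrix formed by rows $S$ (resp. columns $T$). $\|H\|_1=\sum_{i,j}|H_{ij}|$. $H$ is a generalized inverse of $A$ if $AHA=A$, reflexive if additionally $HAH=H$, and ah-symmetric if $AH$ is symmetric. For fixed $\epsilon\ge0$, $A[S,T]$ is a $(1+\epsilon)$-local maximizer for the absolute determinant on the set of $r\times r$ nonsingular submatrices of $A[S,:]$ if $A[S,T]$ is nonsingular and $|\det(A[S,T])|$ cannot be increased by a factor of more than $1+\epsilon$ by swapping an element of $T$ with one element from its complement in $\{1,\dots,n\}$. *)

(* Defs.v *)
From HB Require Import structures.
From mathcomp Require Import all_boot all_order all_algebra.
Set Implicit Arguments. Unset Strict Implicit. Unset Printing Implicit Defensive.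
Import Order.TTheory GRing.Theory Num.Theory.
Local Open Scope ring_scope.

Definition submatrix (R : Type) m n p q (A : 'M[R]_(m, n))
  (S : 'I_p -> 'I_m) (T : 'I_q -> 'I_n) : 'M[R]_(p, q) :=
  \matrix_(i < p, j < q) A (S i) (T j).

Definition swap_idx n r (T : 'I_r -> 'I_n) (k : 'I_r) (j : 'I_n) : 'I_r -> 'I_n :=
  fun i => if i == k then j else T i.

Definition local_max_det (R : numDomainType) m n r (A : 'M[R]_(m, n))
  (S : 'I_r -> 'I_m) (T : 'I_r -> 'I_n) (eps : R) : Prop :=
  \det (submatrix A S T) != 0 /\
  forall (k : 'I_r) (j : 'I_n), (forall i, T i != j) ->
    `|\det (submatrix A S (swap_idx T k j))| <= (1 + eps) * `|\det (submatrix A S T)|.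

Definition norm1 (R : numDomainType) m n (H : 'M[R]_(m, n)) : R :=
  \sum_(i < m) \sum_(j < n) `|H i j|.

Definition gen_inverse (R : pzRingType) m n (A : 'M[R]_(m, n)) (H : 'M[R]_(n, m)) :=
  A *m H *m A = A.
Definition reflexive_ginv (R : pzRingType) m n (A : 'M[R]_(m, n)) (H : 'M[R]_(n, m)) :=
  gen_inverse A H /\ H *m A *m H = H.
Definition ah_symmetric (R : pzRingType) m n (A : 'M[R]_(m, n)) (H : 'M[R]_(n, m)) :=
  (A *m H)^T = A *m H.

Definition pinv_fcr (R : fieldType) m r (B : 'M[R]_(m, r)) : 'M[R]_(r, m) :=
  invmx (B^T *m B) *m B^T.

Definition place_rows (R : pzRingType) n m r (T : 'I_r -> 'I_n) (P : 'M[R]_(r, m))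
  : 'M[R]_(n, m) :=
  (\matrix_(j < n, k < r) (if T k == j then 1 else 0)) *m P.

(* Main.v *)
Require Import Defs.
From HB Require Import structures.
From mathcomp Require Import all_boot all_order all_algebra.
Import Order.TTheory GRing.Theory Num.Theory.
Local Open Scope ring_scope.

Lemma WtW_eq0 (R : realFieldType) m r (W : 'M[R]_(m, r)) : W^T *m W = 0 -> W = 0.
Proof.
move=> h; apply/matrixP => k i.
have := congr1 (fun M : 'M_r => M i i) h; rewrite !mxE => h2.
have hp : forall j : 'I_m, predT j -> 0 <= W^T i j * W j i.
  by move=> j _; rewrite mxE; rewrite -expr2; exact: sqr_ge0.
have := psumr_eq0P hp h2 (i:=k) isT.
rewrite mxE => /eqP; rewrite mulf_eq0 orbb => /eqP.
by [].
Qed.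

Lemma gram_unit (R : realFieldType) m r (W : 'M[R]_(m, r)) : \rank W = r ->
  W^T *m W \in unitmx.
Proof.
move=> rk; rewrite -row_free_unit -kermx_eq0.
set K := kermx _.
have h0 : K *m (W^T *m W) = 0 by apply: mulmx_ker.
have h1 : (W *m K^T)^T *m (W *m K^T) = 0.
  by rewrite trmx_mul trmxK !mulmxA -(mulmxA K) h0 mul0mx.
have h2 := @WtW_eq0 _ _ _ _ h1.
have h3 : K *m W^T = 0 by rewrite -(trmxK (K *m W^T)) trmx_mul trmxK h2 trmx0.
have fr : row_free W^T by rewrite /row_free mxrank_tr rk.
by rewrite -(mulmx_free_eq0 _ fr) h3.
Qed.

Lemma sum_ifE (R : pzRingType) n (c : 'I_n) (f : 'I_n -> R) :
  \sum_j f j * (if c == j then 1 else 0) = f c.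
Proof.
rewrite (bigD1 c) //= eqxx mulr1 big1 ?addr0 // => j /negbTE.
by rewrite eq_sym => ->; rewrite mulr0.
Qed.

Lemma sum_ifE' (R : pzRingType) n (c : 'I_n) (f : 'I_n -> R) :
  \sum_j (if c == j then 1 else 0) * f j = f c.
Proof.
rewrite (bigD1 c) //= eqxx mul1r big1 ?addr0 // => j /negbTE.
by rewrite eq_sym => ->; rewrite mul0r.
Qed.


Lemma norm1_mul (R : realFieldType) a b d (c : R) (M : 'M[R]_(a, b)) (N : 'M[R]_(b, d)) :
  (forall j, \sum_i `|M i j| <= c) -> norm1 (M *m N) <= c * norm1 N.
Proof.
move=> hc; rewrite /norm1.
apply: (@le_trans _ _ (\sum_i \sum_k \sum_j `|M i j| * `|N j k|)).
  apply: ler_sum => i _; apply: ler_sum => k _; rewrite mxE.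
  apply: le_trans (ler_norm_sum _ _ _) _.
  by apply: ler_sum => j _; rewrite normrM.
have -> : \sum_i \sum_k \sum_j `|M i j| * `|N j k| =
    \sum_j \sum_k (\sum_i `|M i j|) * `|N j k|.
  under eq_bigr do rewrite exchange_big.
  rewrite exchange_big /=; apply: eq_bigr => j _.
  rewrite exchange_big /=; apply: eq_bigr => k _.
  by rewrite mulr_suml.
rewrite mulr_sumr; apply: ler_sum => j _.
rewrite mulr_sumr; apply: ler_sum => k _.
by apply: ler_wpM2r => //; apply: hc.
Qed.

Theorem theorem3p7 (R : realFieldType) (m n r : nat) (A : 'M[R]_(m, n))
  (S : 'I_r -> 'I_m) (T : 'I_r -> 'I_n) (eps : R) :
  (1 <= r)%N -> \rank A = r ->
  injective S -> row_free (submatrix A S id) ->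
  0 <= eps -> injective T ->
  local_max_det A S T eps ->
  let H := place_rows T (pinv_fcr (submatrix A id T)) in
  [/\ reflexive_ginv A H, ah_symmetric A H &
      forall H' : 'M[R]_(n, m), reflexive_ginv A H' -> ah_symmetric A H' ->
        norm1 H <= r%:R * (1 + eps) * norm1 H'].
Proof.
move=> _ rkA _ _ eps0 _ [dB0 hloc] /=.
pose E : 'M[R]_(n, r) := \matrix_(j < n, k < r) (if T k == j then 1 else 0).
pose Ssel : 'M[R]_(r, m) := \matrix_(i < r, j < m) (if S i == j then 1 else 0).
pose B := submatrix A S T.
pose AS := submatrix A S id.
have hAh : submatrix A id T = A *m E.
  apply/matrixP => i k; rewrite !mxE; under eq_bigr do rewrite /E mxE.
  by rewrite sum_ifE.
have hAS : AS = Ssel *m A.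
  apply/matrixP => i k; rewrite !mxE; under eq_bigr do rewrite /Ssel mxE.
  by rewrite sum_ifE'.
have hB : B = AS *m E.
  apply/matrixP => i k; rewrite !mxE; under eq_bigr do rewrite /E !mxE.
  by rewrite sum_ifE.
rewrite /pinv_fcr hAh.
set Ah := A *m E.
have Bunit : B \in unitmx by rewrite unitmxE unitfE.
have rkAh : \rank Ah = r.
  apply/eqP; rewrite eqn_leq rank_leq_col /=.
  rewrite -{1}(mxrank_unit Bunit) hB hAS -mulmxA /Ah mulmxA.
  by rewrite -mulmxA; exact: mxrankM_maxr.
set G := Ah^T *m Ah.
have Gunit : G \in unitmx by apply: gram_unit.
set P := invmx G *m Ah^T.
have PAh : P *m Ah = 1%:M by rewrite /P -mulmxA mulVmx.
have -> : place_rows T P = E *m P by [].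
set H := E *m P.
have [D hD] : exists D, A = Ah *m D.
  have sub : (Ah^T <= A^T)%MS by rewrite /Ah trmx_mul submxMl.
  have : (A^T <= Ah^T)%MS.
    by rewrite -(mxrank_leqif_sup sub).2 !mxrank_tr rkA rkAh.
  case/submxP => D0 hD0; exists D0^T.
  by rewrite -(trmxK A) hD0 trmx_mul trmxK.
have AH : A *m H = Ah *m P by rewrite /H mulmxA.
have XA : A *m H *m A = A.
  by rewrite AH {1}hD (mulmxA (Ah *m P)) -(mulmxA Ah P Ah) PAh mulmx1.
have XS : (A *m H)^T = A *m H.
  rewrite AH /P (trmx_mul Ah) (trmx_mul (invmx G)) trmxK trmx_inv /G.
  by rewrite trmx_mul trmxK (mulmxA Ah).
split.
- split => //; rewrite /H -(mulmxA (E *m P)) (mulmxA A E P) -/Ah.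
  by rewrite -(mulmxA E P) (mulmxA P Ah P) PAh mul1mx.
- exact: XS.
move=> H' [YA _] YS.
have XY : A *m H = A *m H'.
  have e1 : A *m H *m (A *m H') = A *m H' by rewrite mulmxA XA.
  have e2 : A *m H' *m (A *m H) = A *m H by rewrite mulmxA YA.
  by apply/esym; rewrite -YS -e1 trmx_mul XS YS e2.
have BP : AS *m H' = B *m P.
  rewrite hAS -mulmxA -XY AH (mulmxA Ssel Ah P) hB hAS.
  by rewrite /Ah (mulmxA Ssel A E).
have PB : P = (invmx B *m AS) *m H'.
  by rewrite -mulmxA BP mulKmx.
have hC : forall i j, `|(invmx B *m AS) i j| <= 1 + eps.
  move=> i j.
  case: (pickP (fun k => T k == j)) => [k /eqP <- | hnot].
    have -> : (invmx B *m AS) i (T k) = (1%:M : 'M_r) i k.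
      rewrite -(mulVmx Bunit) !mxE; apply: eq_bigr => l _.
      by rewrite /AS /B !mxE.
    rewrite mxE normr_nat; case: (i == k) => /=.
      by rewrite lerDl.
    by rewrite addr_ge0.
  have hTj : forall k, T k != j by move=> k; rewrite hnot.
  have := hloc i j hTj.
  set B' := submatrix A S (swap_idx T i j).
  have cof : forall l, cofactor B' l i = cofactor B l i.
    move=> l; rewrite /cofactor; congr (_ * \det _); apply/matrixP => a b.
    by rewrite !mxE /swap_idx eq_sym (negbTE (neq_lift i b)).
  have eC : (invmx B *m AS) i j = \det B' / \det B.
    rewrite /invmx Bunit mxE (expand_det_col B' i) mulr_suml; apply: eq_bigr => l _.
    rewrite cof !mxE /swap_idx eqxx.
    by rewrite -mulrA mulrC (mulrC (cofactor B l i)).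
  by rewrite eC normrM normfV ler_pdivrMr ?normr_gt0.
apply: le_trans (_ : 1 * norm1 P <= _).
  apply: norm1_mul => i.
  rewrite (eq_bigr (fun j => (if T i == j then 1 else 0) * 1)) ?sum_ifE' //.
  by move=> j _; rewrite mxE; case: (T i == j); rewrite ?normr1 ?normr0 ?mul1r ?mul0r.
rewrite mul1r PB; apply: norm1_mul => j.
apply: le_trans (_ : \sum_(i < r) (1 + eps) <= _).
  by apply: ler_sum => i _; apply: hC.
by rewrite sumr_const card_ord mulr_natl.
Qed.
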